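(* On each of the following classes of Kripke models — all models, symmetric models, transitive models, Euclidean models — $\mathcal{L}(\nabla,\bullet)$ is strictly less expressive than $\mathcal{L}(\Diamond)$. On the class of reflexive models, $\mathcal{L}(\nabla,\bullet)$ and $\mathcal{L}(\Diamond)$ are equally expressive.
   Context: Fix a nonempty set $\mathbf{P}$ of propositional variables. $\mathcal{L}(\nabla,\bullet)$: $\phi::=p\mid\neg\phi\mid\phi\land\phi\mid\nabla\phi\mid\bullet\phi$; $\mathcal{L}(\Diamond)$: $\phi::=p\mid\neg\phi\mid\phi\land\phi\mid\Diamond\phi$ ($p\in\mathbf{P}$). Kripke models $\mathcal{M}=\langle S,R,V\rangle$ ($S\neq\emptyset$, $R\subseteq S\times S$, $V:\mathbf{P}\to\mathcal{P}(S)$). Truth: $\mathcal{M},s\vDash\nabla\phi$ iff there are $t,u$ with $sRt$, $sRu$, $\mathcal{M},t\vDash\phi$, $\mathcal{M},u\nvDash\phi$; $\mathcal{M},s\vDash\bullet\phi$ iff $\mathcal{M},s\vDash\phi$ and there is $t$ with $sRt$, $\mathcal{M},t\nvDash\phi$; $\mathcal{M},s\vDash\Diamond\phi$ iff there is $t$ with $sRt$, $\mathcal{M},t\vDash\phi$. For languages $L_1,L_2$ and a class $C$ of models, $L_1$ is at least as expressive as $L_2$ on $C$ if for every $\phi\in L_2$ there is $\psi\in L_1$ with $\mathcal{M},s\vDash\phi\iff\mathcal{M},s\vDash\psi$ for all $\mathcal{M}\in C$ and states $s$; equally expressive means each is at least as expressive as the other; $L_1$ is strictly less expressive than $L_2$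 on $C$ if $L_2$ is at least as expressive as $L_1$ on $C$ but not vice versa. *)

(* Defs.v *)
Set Implicit Arguments.

Section Syntax.
Variable P : Type.

Inductive formNB : Type :=
| NBvar : P -> formNB
| NBneg : formNB -> formNB
| NBand : formNB -> formNB -> formNB
| NBnabla : formNB -> formNB
| NBbullet : formNB -> formNB.

Inductive formD : Type :=
| Dvar : P -> formD
| Dneg : formD -> formD
| Dand : formD -> formD -> formD
| Ddia : formD -> formD.

Record model : Type := Model {
  st : Type;
  st_nonempty : inhabited st;
  rel : st -> st -> Prop;
  val : P -> st -> Prop
}.

Fixpoint satNB (M : model) (s : st M) (phi : formNB) {struct phi} : Prop :=
  match phi with
  | NBvar p => val M p s
  | NBneg f => ~ satNB M s f
  | NBand f g => satNB M s f /\ satNB M s g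
  | NBnabla f => exists t u, rel M s t /\ rel M s u /\ satNB M t f /\ ~ satNB M u f
  | NBbullet f => satNB M s f /\ exists t, rel M s t /\ ~ satNB M t f
  end.

Fixpoint satD (M : model) (s : st M) (phi : formD) {struct phi} : Prop :=
  match phi with
  | Dvar p => val M p s
  | Dneg f => ~ satD M s f
  | Dand f g => satD M s f /\ satD M s g
  | Ddia f => exists t, rel M s t /\ satD M t f
  end.

Definition all_models (M : model) : Prop := True.
Definition symmetric_model (M : model) : Prop :=
  forall s t, rel M s t -> rel M t s.
Definition transitive_model (M : model) : Prop :=
  forall s t u, rel M s t -> rel M t u -> rel M s u.
Definition euclidean_model (M : model) : Prop :=
  forall s t u, rel M s t -> rel M s u -> rel M t u.
Definition reflexive_model (M : model) : Prop :=
  forall s, rel M s s.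

Definition at_least_as_expressive (L1 L2 : Type)
  (sat1 : forall M : model, st M -> L1 -> Prop)
  (sat2 : forall M : model, st M -> L2 -> Prop)
  (C : model -> Prop) : Prop :=
  forall phi : L2, exists psi : L1,
    forall M : model, C M -> forall s : st M, sat2 M s phi <-> sat1 M s psi.

Definition equally_expressive (L1 L2 : Type)
  (sat1 : forall M : model, st M -> L1 -> Prop)
  (sat2 : forall M : model, st M -> L2 -> Prop)
  (C : model -> Prop) : Prop :=
  at_least_as_expressive sat1 sat2 C /\ at_least_as_expressive sat2 sat1 C.

Definition strictly_less_expressive (L1 L2 : Type)
  (sat1 : forall M : model, st M -> L1 -> Prop)
  (sat2 : forall M : model, st M -> L2 -> Prop)
  (C : model -> Prop) : Prop :=
  at_least_as_expressive sat2 sat1 C /\ ~ at_least_as_expressive sat1 sat2 C.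

End Syntax.

(* Main.v *)
Require Import Defs.
From Stdlib Require Import Classical.

Fixpoint trD {P} (f : formNB P) : formD P :=
  match f with
  | NBvar p => Dvar p
  | NBneg g => Dneg (trD g)
  | NBand g h => Dand (trD g) (trD h)
  | NBnabla g => Dand (Ddia (trD g)) (Ddia (Dneg (trD g)))
  | NBbullet g => Dand (trD g) (Ddia (Dneg (trD g)))
  end.

Lemma trD_ok {P} (f : formNB P) M s : satD M s (trD f) <-> satNB M s f.
Proof.
  revert s; induction f; intro s; simpl.
  - tauto.
  - rewrite IHf; tauto.
  - rewrite IHf1, IHf2; tauto.
  - split.
    + intros [[t [Ht Ft]] [u [Hu Fu]]]. exists t, u.
      rewrite IHf in Ft, Fu. auto.
    + intros [t [u [Ht [Hu [Ft Fu]]]]]. split.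
      * exists t; rewrite IHf; auto.
      * exists u; rewrite IHf; auto.
  - rewrite IHf. split.
    + intros [A [t [Ht Ft]]]. split; auto. exists t. rewrite IHf in Ft; auto.
    + intros [A [t [Ht Ft]]]. split; auto. exists t. rewrite IHf; auto.
Qed.

Lemma part1 {P} C : at_least_as_expressive (@satD P) (@satNB P) C.
Proof. intro phi. exists (trD phi). intros M _ s. symmetry. apply trD_ok. Qed.

Definition Mloop P : model P := @Model P unit (inhabits tt) (fun _ _ => True) (fun _ _ => True).
Definition Mdead P : model P := @Model P unit (inhabits tt) (fun _ _ => False) (fun _ _ => True).

Lemma agree {P} (f : formNB P) :
  (satNB (Mloop P) tt f <-> satNB (Mdead P) tt f) /\ (satNB (Mloop P) tt f \/ ~ satNB (Mloop P) tt f).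
Proof.
  induction f; simpl.
  - tauto.
  - tauto.
  - tauto.
  - split.
    + split.
      * intros [[] [[] [_ [_ [A B]]]]]. tauto.
      * intros [_ [_ [[] _]]].
    + right. intros [[] [[] [_ [_ [A B]]]]]. tauto.
  - split.
    + split.
      * intros [A [[] [_ B]]]. tauto.
      * intros [_ [_ [[] _]]].
    + right. intros [A [[] [_ B]]]. tauto.
Qed.



Lemma part2 {P} (p : P) (C : model P -> Prop) :
  C (Mloop P) -> C (Mdead P) -> ~ at_least_as_expressive (@satNB P) (@satD P) C.
Proof.
  intros H1 H2 H. destruct (H (Ddia (Dvar p))) as [psi Hpsi].
  pose proof (Hpsi _ H1 tt) as A. pose proof (Hpsi _ H2 tt) as B.
  simpl in A, B. destruct (agree psi) as [E _].
  assert (X : satNB (Mloop P) tt psi) by (apply A; exists tt; auto).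
  apply E in X. apply B in X. destruct X as [_ [[] _]].
Qed.

Fixpoint trNB {P} (f : formD P) : formNB P :=
  match f with
  | Dvar p => NBvar p
  | Dneg g => NBneg (trNB g)
  | Dand g h => NBand (trNB g) (trNB h)
  | Ddia g => NBneg (NBand (NBneg (trNB g)) (NBneg (NBnabla (trNB g))))
  end.

Lemma trNB_ok {P} (f : formD P) M : reflexive_model M -> forall s, satNB M s (trNB f) <-> satD M s f.
Proof.
  intro R. induction f; intro s; simpl.
  - tauto.
  - rewrite IHf; tauto.
  - rewrite IHf1, IHf2; tauto.
  - split.
    + intro A. destruct (classic (satD M s f)) as [F|F].
      * exists s; auto.
      * destruct (classic (exists t u, rel M s t /\ rel M s u /\ satNB M t (trNB f) /\ ~ satNB M u (trNB f))) as [[t [u [Ht [_ [Ft _]]]]]|G].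
        -- exists t; split; auto; apply IHf; auto.
        -- exfalso; apply A; split; auto. rewrite IHf; auto.
    + intros [t [Ht Ft]] [A B]. apply B. exists t, s. repeat split; auto.
      rewrite IHf; auto.
Qed.

Theorem proposition3 (P : Type) (HP : inhabited P) :
  strictly_less_expressive (@satNB P) (@satD P) (@all_models P) /\
  strictly_less_expressive (@satNB P) (@satD P) (@symmetric_model P) /\
  strictly_less_expressive (@satNB P) (@satD P) (@transitive_model P) /\
  strictly_less_expressive (@satNB P) (@satD P) (@euclidean_model P) /\
  equally_expressive (@satNB P) (@satD P) (@reflexive_model P).
Proof.
  destruct HP as [p].
  repeat split; try apply part1; try (apply (part2 p); compute; auto; fail).
  intro phi. exists (trNB phi). intros M R s. symmetry. apply trNB_ok; auto.
Qed.
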